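(* For every integer $r\ge1$ there is a constant $C_r$ such that for every irreducible type $r$ random walk on a cyclic group $\mathbb{Z}/n\mathbb{Z}$ with transition matrix $A$, \[(1-|\lambda_m|)\,t_A(\tfrac12)\le C_r,\] where $|\lambda_m|=\max_{k\neq 0}|\lambda_k|$ is the largest absolute value of a nontrivial eigenvalue of $A$.
   Context: A type $r$ random walk on $\mathbb{Z}/n\mathbb{Z}$: $n\ge\pi^r$, and from $x$ the walk moves to $x+s$ with $s$ chosen uniformly among the $2r+1$ steps $\pm a_1,\dots,\pm a_r,0$ for some $a_1,\dots,a_r\in\mathbb{Z}/n\mathbb{Z}$. $A$ is its transition matrix with eigenvalues $\lambda_0=1,\lambda_1,\dots,\lambda_{n-1}$. With ${\bf v}_0=\frac1n{\bf 1}$ and ${\bf x}_0=(1,0,\dots,0)$, $d_A(t)=|A^t{\bf x}_0-{\bf v}_0|_1$ and $t_A(d)=\max\{t: d_A(t)\ge d\}$. *)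

(* Defs.v *)
From Stdlib Require Import Reals Lra Lia Arith List.
Open Scope R_scope.

Fixpoint sumR (n : nat) (f : nat -> R) : R :=
  match n with
  | O => 0
  | S m => sumR m f + f m
  end.

(* Elements of Z/nZ are represented by naturals 0..n-1 (arithmetic mod n).
   The step multiset of the type r walk with generators a 0, ..., a (r-1):
   0, +a_j, -a_j  (j < r), of size 2r+1. *)
Definition steps (n r : nat) (a : nat -> nat) : list nat :=
  0%nat :: flat_map (fun j => (a j mod n)%nat :: ((n - a j mod n) mod n)%nat :: nil)
                    (seq 0 r).

Definition trans (n r : nat) (a : nat -> nat) (i j : nat) : R :=
  (fold_right (fun s acc => (if Nat.eqb ((i + s) mod n) j then 1 else 0) + acc) 0
     (steps n r a)) / INR (2 * r + 1).

Definition Amul (n r : nat) (a : nat -> nat) (v : nat -> R) (i : nat) : R :=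
  sumR n (fun j => trans n r a i j * v j).

Fixpoint Apow (n r : nat) (a : nat -> nat) (t : nat) (v : nat -> R) : nat -> R :=
  match t with
  | O => v
  | S t' => Amul n r a (Apow n r a t' v)
  end.

Definition ev (k : nat) (i : nat) : R := if Nat.eqb i k then 1 else 0.

Definition irreducible (n r : nat) (a : nat -> nat) : Prop :=
  forall i j, (i < n)%nat -> (j < n)%nat -> exists t, Apow n r a t (ev j) i > 0.

Definition dA (n r : nat) (a : nat -> nat) (t : nat) : R :=
  sumR n (fun i => Rabs (Apow n r a t (ev 0) i - / INR n)).

Definition is_tA (n r : nat) (a : nat -> nat) (d : R) (t : nat) : Prop :=
  dA n r a t >= d /\ (forall s, dA n r a s >= d -> (s <= t)%nat).

(* lam is a nontrivial eigenvalue of A, i.e. one of lambda_1..lambda_{n-1}: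
   A is real symmetric with 1 an eigenvector of eigenvalue lambda_0 = 1, so
   the nontrivial eigenvalues are exactly the eigenvalues of A on 1^perp. *)
Definition nontriv_eig (n r : nat) (a : nat -> nat) (lam : R) : Prop :=
  exists v : nat -> R,
    (exists i, (i < n)%nat /\ v i <> 0) /\
    sumR n v = 0 /\
    (forall i, (i < n)%nat -> Amul n r a v i = lam * v i).

Definition is_lam_m (n r : nat) (a : nat -> nat) (M : R) : Prop :=
  (exists lam, nontriv_eig n r a lam /\ Rabs lam = M) /\
  (forall lam, nontriv_eig n r a lam -> Rabs lam <= M).

(* Main.v *)
Require Import Defs.
From Stdlib Require Import Reals Lra Lia List ZArith.
Open Scope R_scope.


Lemma sumR_ext n f g : (forall i, (i < n)%nat -> f i = g i) -> sumR n f = sumR n g.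
Proof. induction n; simpl; intros H; auto. rewrite IHn by (intros; apply H; lia). rewrite H by lia; auto. Qed.

Lemma sumR_plus n f g : sumR n (fun i => f i + g i) = sumR n f + sumR n g.
Proof. induction n; simpl; [ring|rewrite IHn; ring]. Qed.

Lemma sumR_scal n c f : sumR n (fun i => c * f i) = c * sumR n f.
Proof. induction n; simpl; [ring|rewrite IHn; ring]. Qed.

Lemma sumR_const0 n : sumR n (fun _ => 0) = 0.
Proof. induction n; simpl; [ring|rewrite IHn; ring]. Qed.

Lemma sumR_le n f g : (forall i, (i < n)%nat -> f i <= g i) -> sumR n f <= sumR n g.
Proof. induction n; simpl; intros H; [lra|]. assert (f n <= g n) by (apply H; lia).
 assert (sumR n f <= sumR n g) by (apply IHn; intros; apply H; lia). lra. Qed.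

Lemma sumR_nonneg n f : (forall i, (i < n)%nat -> 0 <= f i) -> 0 <= sumR n f.
Proof. intros H. rewrite <- (sumR_const0 n). apply sumR_le; auto. Qed.

Lemma sumR_abs n f : Rabs (sumR n f) <= sumR n (fun i => Rabs (f i)).
Proof. induction n; simpl. rewrite Rabs_R0; lra.
 eapply Rle_trans. apply Rabs_triang. lra. Qed.

Lemma sumR_single_le n f k : (forall i, (i < n)%nat -> 0 <= f i) -> (k < n)%nat -> f k <= sumR n f.
Proof. induction n; simpl; intros H Hk; [lia|].
 destruct (Nat.eq_dec k n). subst. assert (0 <= sumR n f) by (apply sumR_nonneg; intros; apply H; lia). lra.
 assert (f k <= sumR n f) by (apply IHn; [intros; apply H|]; lia). assert (0 <= f n) by (apply H; lia). lra. Qed.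

Lemma sumR_swap n m (f : nat -> nat -> R) :
  sumR n (fun i => sumR m (fun j => f i j)) = sumR m (fun j => sumR n (fun i => f i j)).
Proof. induction n; simpl. rewrite sumR_const0; auto.
 rewrite IHn. rewrite <- sumR_plus. auto. Qed.

Lemma sumR_first n f : sumR (S n) f = f 0%nat + sumR n (fun k => f (S k)).
Proof. induction n; simpl. ring. simpl in IHn. rewrite IHn. ring. Qed.

Lemma sumR_delta n m v : (m < n)%nat -> sumR n (fun j => (if Nat.eqb m j then 1 else 0) * v j) = v m.
Proof. induction n; intros H; simpl; [lia|].
 destruct (Nat.eq_dec m n). subst. rewrite Nat.eqb_refl.
 rewrite (sumR_ext n _ (fun _ => 0)). rewrite sumR_const0; ring.
 intros i Hi. destruct (Nat.eqb_spec n i); [lia|ring].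
 rewrite IHn by lia. destruct (Nat.eqb_spec m n); [lia|ring]. Qed.

Definition lsum (L : list nat) (g : nat -> R) : R := fold_right (fun s acc => g s + acc) 0 L.

Lemma lsum_app L1 L2 g : lsum (L1 ++ L2) g = lsum L1 g + lsum L2 g.
Proof. induction L1; simpl; [ring|rewrite IHL1; ring]. Qed.

Lemma lsum_flat_map r (F : nat -> list nat) g :
  lsum (flat_map F (seq 0 r)) g = sumR r (fun j => lsum (F j) g).
Proof. induction r. reflexivity. rewrite seq_S, flat_map_app, lsum_app, IHr. simpl.
 rewrite app_nil_r. reflexivity. Qed.

Lemma sumR_count n (P : nat -> bool) :
  sumR n (fun k => if P k then 1 else 0) = INR (length (filter P (seq 0 n))).
Proof. induction n. reflexivity. rewrite seq_S, filter_app, length_app. simpl.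
 rewrite IHn. destruct (P n); simpl; rewrite ?plus_INR; simpl; ring. Qed.

Lemma geom_sum N : sumR N (fun m => (1/8) ^ (S m)) = 1/7 - (1/7) * (1/8)^N.
Proof. induction N. simpl. field. cbn [sumR]. rewrite IHN. simpl. field. Qed.

Lemma sumR_one n : sumR n (fun _ => 1) = INR n.
Proof. induction n. auto. cbn [sumR]. rewrite IHn, S_INR. auto. Qed.


Definition E (n m : nat) : R := cos (2 * PI * INR m / INR n).

Lemma INRp n : (0 < n)%nat -> 0 < INR n.
Proof. intros; apply lt_0_INR; auto. Qed.

Lemma E_mod n m : (0 < n)%nat -> E n (m mod n) = E n m.
Proof. intros Hn. unfold E. pose proof (INRp n Hn).
 rewrite (Nat.div_mod_eq m n) at 2. rewrite plus_INR, mult_INR.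
 replace (2 * PI * (INR n * INR (m / n) + INR (m mod n)) / INR n) with
   (2 * PI * INR (m mod n) / INR n + 2 * INR (m / n) * PI) by (field; lra).
 rewrite cos_period; auto. Qed.

Lemma E_refl n u : (0 < n)%nat -> (u <= n)%nat -> E n (n - u) = E n u.
Proof. intros Hn Hu. unfold E. pose proof (INRp n Hn). rewrite minus_INR by auto.
 replace (2 * PI * (INR n - INR u) / INR n) with (- (2 * PI * INR u / INR n) + 2 * INR 1 * PI)
   by (simpl; field; lra). rewrite cos_period, cos_neg; auto. Qed.

Lemma E0 n : E n 0 = 1.
Proof. unfold E. simpl. replace (2 * PI * 0 / INR n) with 0 by (unfold Rdiv; ring). apply cos_0. Qed.

Lemma tele N b : 2 * sin b * sumR N (fun k => cos (INR k * (2 * b))) = sin (INR N * (2*b) - b) + sin b.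
Proof. induction N. simpl. replace (0 * (2*b) - b) with (-b) by ring. rewrite sin_neg. ring.
 simpl sumR. rewrite Rmult_plus_distr_l, IHN. rewrite S_INR.
 replace ((INR N + 1) * (2 * b) - b) with (INR N * (2*b) + b) by ring.
 rewrite sin_minus, sin_plus. ring. Qed.

Lemma cos_sum_zero n m : (0 < m)%nat -> (m < n)%nat -> sumR n (fun k => E n (k * m)) = 0.
Proof. intros Hm Hmn. pose proof (INRp n ltac:(lia)) as Hn.
 set (b := PI * INR m / INR n).
 assert (Hs : 0 < sin b). { apply sin_gt_0; unfold b.
   apply Rdiv_lt_0_compat; [apply Rmult_lt_0_compat; [apply PI_RGT_0| apply INRp; lia]|lra].
   apply Rmult_lt_reg_r with (INR n); auto. unfold Rdiv. rewrite Rmult_assoc, Rinv_l by lra.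
   rewrite Rmult_1_r. apply Rmult_lt_compat_l. apply PI_RGT_0. apply lt_INR; auto. }
 assert (H := tele n b).
 rewrite (sumR_ext n _ (fun k => cos (INR k * (2 * b)))).
 2:{ intros i Hi. unfold E, b. rewrite mult_INR. f_equal. field. lra. }
 replace (INR n * (2 * b) - b) with (- b + 2 * INR m * PI) in H by (unfold b; field; lra).
 rewrite sin_period, sin_neg in H.
 assert (2 * sin b * sumR n (fun k => cos (INR k * (2 * b))) = 0) by lra.
 apply Rmult_integral in H0. destruct H0; lra. Qed.

Lemma sin_le_id y : 0 <= y <= 2 -> sin y <= y.
Proof. intros Hy. assert (PI2 := PI2_3_2).
 destruct (sin_bound y 0) as [_ H]; try lra.
 replace (sin_approx y (2 * (0 + 1))) with (y - y^3/6 + y^5/120) in H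
  by (unfold sin_approx, sin_term; simpl; field).
 assert (0 <= y^3) by (apply pow_le; lra). assert (y^2 <= 4) by nra.
 assert (y^5 = y^3 * y^2) by ring. nra. Qed.

Lemma sin_ge_third y : 0 <= y <= 2 -> y / 3 <= sin y.
Proof. intros Hy. assert (PI2 := PI2_3_2).
 destruct (sin_bound y 0) as [H _]; try lra.
 replace (sin_approx y (2 * 0 + 1)) with (y - y^3/6) in H
  by (unfold sin_approx, sin_term; simpl; field).
 nra. Qed.

Lemma E_bounds n d : (0 < n)%nat -> (2 * d <= n)%nat ->
  2 * (INR d / INR n)^2 <= 1 - E n d <= 2 * PI^2 * (INR d / INR n)^2.
Proof. intros Hn Hd. pose proof (INRp n Hn). assert (PI2 := PI2_3_2). assert (P4 := PI_4).
 set (w := INR d / INR n).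
 assert (Hw : 0 <= w <= 1/2). { unfold w. split. unfold Rdiv; apply Rmult_le_pos; [apply pos_INR|left; apply Rinv_0_lt_compat; lra].
   apply Rmult_le_reg_r with (INR n); auto. unfold Rdiv. rewrite Rmult_assoc, Rinv_l by lra.
   apply le_INR in Hd. rewrite mult_INR in Hd. simpl in Hd. lra. }
 unfold E. replace (2 * PI * INR d / INR n) with (2 * (PI * w)) by (unfold w; field; lra).
 rewrite cos_2a_sin.
 assert (Hy : 0 <= PI * w <= 2) by nra.
 pose proof (sin_le_id _ Hy). pose proof (sin_ge_third _ Hy).
 set (s := sin (PI * w)) in *.
 assert (w <= s) by nra. assert (0 <= w) by lra.
 split. nra. assert (s * s <= (PI*w) * (PI*w)) by (apply Rmult_le_compat; lra). nra. Qed.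


Definition lam n r (a : nat -> nat) k := (1 + 2 * sumR r (fun j => E n (k * (a j mod n)))) / INR (2*r+1).
Definition vk n k := fun i => E n (k * i).

Lemma Amul_gen n r a v i : (0 < n)%nat ->
  Amul n r a v i = lsum (steps n r a) (fun s => v ((i+s) mod n)) / INR (2*r+1).
Proof. intros Hn. unfold Amul, trans. generalize (steps n r a). intros L.
 induction L as [|s L IH]; cbn [fold_right lsum].
 - rewrite (sumR_ext n _ (fun _ => 0)). rewrite sumR_const0. unfold Rdiv; ring.
   intros; unfold Rdiv; ring.
 - rewrite (sumR_ext n _ (fun j => / INR (2*r+1) * ((if (i + s) mod n =? j then 1 else 0) * v j)
     + (fold_right (fun s0 acc => (if (i + s0) mod n =? j then 1 else 0) + acc) 0 L / INR (2 * r + 1)) * v j)).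
   2:{ intros j _. set (X := if (i + s) mod n =? j then 1 else 0). set (Y := fold_right _ _ L). unfold Rdiv; ring. }
   rewrite sumR_plus, sumR_scal, IH, sumR_delta. unfold lsum. set (Y := fold_right _ _ L). unfold Rdiv; ring.
   apply Nat.mod_upper_bound; lia. Qed.

Lemma E_mulmod n k m : (0 < n)%nat -> E n (k * (m mod n)) = E n (k * m).
Proof. intros Hn. rewrite <- E_mod by auto. rewrite Nat.Div0.mul_mod_idemp_r.
 apply E_mod; auto. Qed.

Lemma E_pair n k i s : (0 < n)%nat -> (s < n)%nat ->
  E n (k*(i+s)) + E n (k*(i + (n-s) mod n)) = 2 * E n (k*i) * E n (k*s).
Proof. intros Hn Hs. pose proof (INRp n Hn). destruct (Nat.eq_dec s 0).
 - subst. rewrite Nat.sub_0_r, Nat.Div0.mod_same. rewrite Nat.mul_0_r, E0, Nat.add_0_r. ring.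
 - rewrite Nat.mod_small by lia. unfold E. rewrite !mult_INR, !plus_INR, minus_INR by lia.
   replace (2 * PI * (INR k * (INR i + (INR n - INR s))) / INR n) with
     ((2 * PI * (INR k * INR i) / INR n - 2 * PI * (INR k * INR s) / INR n) + 2 * INR k * PI)
     by (field; lra).
   rewrite cos_period.
   replace (2 * PI * (INR k * (INR i + INR s)) / INR n) with
     (2 * PI * (INR k * INR i) / INR n + 2 * PI * (INR k * INR s) / INR n) by (field; lra).
   rewrite cos_plus, cos_minus. ring. Qed.

Lemma eigen n r a k i : (0 < n)%nat -> Amul n r a (vk n k) i = lam n r a k * vk n k i.
Proof. intros Hn. rewrite Amul_gen by auto. unfold steps, lam, vk. simpl lsum.
 rewrite lsum_flat_map. simpl.
 rewrite (sumR_ext r _ (fun j => 2 * E n (k*i) * E n (k * (a j mod n)))).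
 2:{ intros j Hj. rewrite (E_mulmod n k (i + a j mod n)), (E_mulmod n k (i + (n - a j mod n) mod n)) by auto. rewrite Rplus_0_r. apply E_pair; auto.
     apply Nat.mod_upper_bound; lia. }
 rewrite E_mulmod, Nat.add_0_r by auto. rewrite sumR_scal. unfold Rdiv. ring. Qed.

Lemma lam0 n r a : lam n r a 0 = 1.
Proof. unfold lam. rewrite (sumR_ext r _ (fun _ => 1)).
 2:{ intros; simpl; apply E0. }
 rewrite sumR_one. rewrite plus_INR, mult_INR. simpl. field. pose proof (pos_INR r). lra. Qed.

Lemma Amul_ext n r a v w i : (forall j, (j < n)%nat -> v j = w j) -> Amul n r a v i = Amul n r a w i.
Proof. intros H. unfold Amul. apply sumR_ext. intros j Hj. rewrite H; auto. Qed.

Lemma Amul_lin n r a (c : nat -> R) (V : nat -> nat -> R) i :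
  Amul n r a (fun j => sumR n (fun k => c k * V k j)) i = sumR n (fun k => c k * Amul n r a (V k) i).
Proof. unfold Amul.
 rewrite (sumR_ext n _ (fun j => sumR n (fun k => c k * (trans n r a i j * V k j)))).
 2:{ intros. rewrite <- sumR_scal. apply sumR_ext. intros; ring. }
 rewrite sumR_swap. apply sumR_ext. intros. rewrite sumR_scal. auto. Qed.

Lemma ev0_repr n i : (i < n)%nat -> ev 0 i = / INR n * sumR n (fun k => vk n k i).
Proof. intros Hi. pose proof (INRp n ltac:(lia)). unfold ev, vk. destruct (Nat.eqb_spec i 0).
 - subst. rewrite (sumR_ext n _ (fun _ => 1)). 2:{ intros. rewrite Nat.mul_0_r. apply E0. }
   rewrite sumR_one. field. lra.
 - rewrite cos_sum_zero by lia. ring. Qed.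

Lemma Apow_repr n r a t i : (i < n)%nat ->
  Apow n r a t (ev 0) i = / INR n * sumR n (fun k => lam n r a k ^ t * vk n k i).
Proof. revert i. induction t; intros i Hi.
 - cbn [Apow]. rewrite (ev0_repr n i Hi). f_equal. apply sumR_ext. intros; ring.
 - cbn [Apow]. rewrite (Amul_ext n r a _ (fun j => sumR n (fun k => (/ INR n * lam n r a k ^ t) * vk n k j))).
   2:{ intros j Hj. rewrite IHt by auto. rewrite <- sumR_scal. apply sumR_ext; intros; ring. }
   rewrite Amul_lin. rewrite <- sumR_scal. apply sumR_ext. intros k Hk.
   rewrite eigen by lia. cbn [pow]. ring. Qed.

Lemma dA_bound n r a t : (0 < n)%nat ->
  dA n r a t <= sumR (n-1) (fun k => Rabs (lam n r a (S k)) ^ t).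
Proof. intros Hn. pose proof (INRp n Hn). unfold dA.
 eapply Rle_trans. apply (sumR_le n _ (fun i => / INR n * sumR (n-1) (fun k => Rabs (lam n r a (S k)) ^ t))).
 - intros i Hi. rewrite Apow_repr by auto.
   assert (Hs : forall f, sumR n f = f 0%nat + sumR (n-1) (fun k => f (S k))).
   { intros f. destruct n; [lia|]. replace (S n - 1)%nat with n by lia. apply sumR_first. }
   rewrite Hs. rewrite lam0. unfold vk at 1. rewrite Nat.mul_0_l, E0.
   replace (/ INR n * (1 ^ t * 1 + sumR (n - 1) (fun k => lam n r a (S k) ^ t * vk n (S k) i)) - / INR n)
    with (/ INR n * sumR (n - 1) (fun k => lam n r a (S k) ^ t * vk n (S k) i)) by (rewrite pow1; ring).
   rewrite Rabs_mult, Rabs_inv, (Rabs_right (INR n)) by lra.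
   apply Rmult_le_compat_l. left; apply Rinv_0_lt_compat; lra.
   eapply Rle_trans. apply sumR_abs. apply sumR_le. intros k Hk.
   rewrite Rabs_mult, <- RPow_abs. unfold vk, E. pose proof (COS_bound (2 * PI * INR (S k * i) / INR n)).
   assert (Rabs (cos (2 * PI * INR (S k * i) / INR n)) <= 1) by (apply Rabs_le; lra).
   assert (0 <= Rabs (lam n r a (S k)) ^ t) by (apply pow_le; apply Rabs_pos).
   nra.
 - set (S0 := sumR (n - 1) (fun k => Rabs (lam n r a (S k)) ^ t)).
   rewrite (sumR_ext n _ (fun _ => (/ INR n * S0) * 1)) by (intros; ring).
   rewrite sumR_scal, sumR_one. right. field. lra. Qed.


Definition U n (a : nat -> nat) k j := ((k * a j) mod n)%nat.
Definition dst n u := Nat.min u (n - u).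
Fixpoint maxN r (f : nat -> nat) : nat := match r with O => O | S r' => Nat.max (maxN r' f) (f r') end.
Definition Nk n r a k := maxN r (fun j => dst n (U n a k j)).

Lemma maxN_ge r f j : (j < r)%nat -> (f j <= maxN r f)%nat.
Proof. induction r; simpl; intros; [lia|]. destruct (Nat.eq_dec j r). subst; lia.
 specialize (IHr ltac:(lia)). lia. Qed.

Lemma maxN_lt r f B : (0 < B)%nat -> (forall j, (j < r)%nat -> (f j < B)%nat) -> (maxN r f < B)%nat.
Proof. induction r; simpl; intros; [lia|]. specialize (IHr H (fun j Hj => H0 j ltac:(lia))).
 specialize (H0 r ltac:(lia)). lia. Qed.

Lemma maxN_att r f : (1 <= r)%nat -> exists j, (j < r)%nat /\ maxN r f = f j.
Proof. induction r; intros; [lia|]. simpl. destruct r.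
 - exists 0%nat; simpl; split; auto.
 - destruct IHr as [j [Hj Hm]]; [lia|]. destruct (Nat.le_ge_cases (maxN (S r) f) (f (S r))).
   + exists (S r). split; [lia|]. lia.
   + exists j. split; [lia|]. lia. Qed.

Lemma dist_half n u : (2 * dst n u <= n)%nat.
Proof. unfold dst. lia. Qed.

Lemma E_dist n a k j : (0 < n)%nat -> E n (k * (a j mod n)) = E n (dst n (U n a k j)).
Proof. intros Hn. rewrite E_mulmod by auto. rewrite <- (E_mod n (k * a j)) by auto.
 unfold dst, U. set (u := ((k * a j) mod n)%nat).
 assert (u < n)%nat by (apply Nat.mod_upper_bound; lia).
 destruct (Nat.le_ge_cases u (n - u)).
 - rewrite Nat.min_l by auto. auto.
 - rewrite Nat.min_r by auto. rewrite E_refl by lia. auto. Qed.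

Lemma lam_dist n r a k : (0 < n)%nat ->
  lam n r a k = (1 + 2 * sumR r (fun j => E n (dst n (U n a k j)))) / INR (2*r+1).
Proof. intros. unfold lam. f_equal. f_equal. f_equal. apply sumR_ext. intros. apply E_dist; auto. Qed.

Definition wk n r a k := INR (Nk n r a k) / INR n.

Lemma one_minus_lam n r a k : (0 < n)%nat ->
  1 - lam n r a k = 2 * sumR r (fun j => 1 - E n (dst n (U n a k j))) / INR (2*r+1).
Proof. intros. rewrite lam_dist by auto.
 assert (Hs : sumR r (fun j => 1 - E n (dst n (U n a k j))) = INR r - sumR r (fun j => E n (dst n (U n a k j)))).
 { rewrite (sumR_ext r _ (fun j => 1 + (-1) * E n (dst n (U n a k j)))) by (intros; ring).
   rewrite sumR_plus, sumR_scal, sumR_one. ring. }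
 rewrite Hs. rewrite plus_INR, mult_INR. simpl. field. pose proof (pos_INR r). lra. Qed.

Lemma lam_upper_gap n r a k : (0 < n)%nat ->
  1 - lam n r a k <= 2 * PI^2 * (wk n r a k)^2.
Proof. intros Hn. rewrite one_minus_lam by auto. pose proof (INRp n Hn).
 assert (Hb : sumR r (fun j => 1 - E n (dst n (U n a k j))) <= sumR r (fun _ => 2 * PI^2 * (wk n r a k)^2)).
 { apply sumR_le. intros j Hj. destruct (E_bounds n (dst n (U n a k j)) Hn (dist_half n _)) as [_ H2].
   eapply Rle_trans. apply H2. apply Rmult_le_compat_l. apply Rmult_le_pos; [lra|apply pow2_ge_0].
   unfold wk. apply pow_incr. split. unfold Rdiv; apply Rmult_le_pos; [apply pos_INR|left; apply Rinv_0_lt_compat; lra].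
   unfold Rdiv. apply Rmult_le_compat_r. left; apply Rinv_0_lt_compat; lra. apply le_INR.
   apply (maxN_ge r (fun j => dst n (U n a k j))). auto. }
 rewrite (sumR_ext r (fun _ => 2 * PI^2 * (wk n r a k)^2) (fun _ => (2 * PI^2 * (wk n r a k)^2) * 1)) in Hb by (intros; ring).
 rewrite sumR_scal, sumR_one in Hb.
 set (X := 2 * PI ^ 2 * wk n r a k ^ 2) in *. assert (0 <= X) by (unfold X; apply Rmult_le_pos; [nra|apply pow2_ge_0]).
 rewrite plus_INR, mult_INR. simpl. pose proof (pos_INR r).
 apply Rmult_le_reg_r with (2 * INR r + 1); [lra|]. unfold Rdiv. rewrite Rmult_assoc, Rinv_l by lra. nra. Qed.

Lemma wk_bounds n r a k : (0 < n)%nat -> 0 <= wk n r a k <= 1/2.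
Proof. intros Hn. pose proof (INRp n Hn). unfold wk. split.
 unfold Rdiv; apply Rmult_le_pos; [apply pos_INR|left; apply Rinv_0_lt_compat; lra].
 apply Rmult_le_reg_r with (INR n); auto. unfold Rdiv. rewrite Rmult_assoc, Rinv_l by lra.
 assert (2 * Nk n r a k <= n)%nat.
 { unfold Nk. destruct r. simpl; lia. destruct (maxN_att (S r) (fun j => dst n (U n a k j))) as [j [_ ->]]; [lia|].
   apply dist_half. }
 apply le_INR in H0. rewrite mult_INR in H0. simpl in H0. lra. Qed.

Lemma lam_abs_bound n r a k : (0 < n)%nat -> (1 <= r)%nat ->
  Rabs (lam n r a k) <= 1 - 4 / INR (2*r+1) * (wk n r a k)^2.
Proof. intros Hn Hr. pose proof (INRp n Hn). pose proof (wk_bounds n r a k Hn).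
 assert (HD : INR (2*r+1) = 2 * INR r + 1) by (rewrite plus_INR, mult_INR; simpl; ring).
 assert (1 <= INR r) by (apply (le_INR 1); auto).
 destruct (maxN_att r (fun j => dst n (U n a k j)) Hr) as [j0 [Hj0 Hm]].
 assert (Hw : wk n r a k = INR (dst n (U n a k j0)) / INR n) by (unfold wk, Nk; rewrite Hm; auto).
 assert (Hsum : 1 - E n (dst n (U n a k j0)) <= sumR r (fun j => 1 - E n (dst n (U n a k j)))).
 { apply (sumR_single_le r (fun j => 1 - E n (dst n (U n a k j)))); auto.
   intros i _. unfold E. pose proof (COS_bound (2 * PI * INR (dst n (U n a k i)) / INR n)). lra. }
 destruct (E_bounds n (dst n (U n a k j0)) Hn (dist_half n _)) as [Hlow _].
 rewrite <- Hw in Hlow.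
 assert (Hup : lam n r a k <= 1 - 4 / INR (2*r+1) * (wk n r a k)^2).
 { assert (1 - lam n r a k >= 4 / INR (2*r+1) * (wk n r a k)^2); [|lra].
   rewrite one_minus_lam by auto. rewrite HD. unfold Rdiv.
   assert (0 < / (2 * INR r + 1)) by (apply Rinv_0_lt_compat; lra).
   set (X := sumR r (fun j => 1 - E n (dst n (U n a k j)))) in *. nra. }
 assert (Hlo : - lam n r a k <= 1 - 4 / INR (2*r+1) * (wk n r a k)^2).
 { rewrite lam_dist by auto.
   assert (sumR r (fun j => 1 + E n (dst n (U n a k j))) >= 0).
   { apply Rle_ge, sumR_nonneg. intros i _. unfold E. pose proof (COS_bound (2 * PI * INR (dst n (U n a k i)) / INR n)). lra. }
   assert (Hs : sumR r (fun j => 1 + E n (dst n (U n a k j))) = INR r + sumR r (fun j => E n (dst n (U n a k j)))).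
   { rewrite sumR_plus, sumR_one. auto. }
   rewrite Hs in H2. rewrite HD.
   assert (wk n r a k ^ 2 <= 1/4) by nra.
   set (S := sumR r (fun j => E n (dst n (U n a k j)))) in *.
   apply Rmult_le_reg_r with (2 * INR r + 1); [lra|].
   unfold Rdiv. replace (- ((1 + 2 * S) * / (2 * INR r + 1)) * (2 * INR r + 1)) with (- (1 + 2*S)) by (field; lra).
   replace ((1 - 4 * / (2 * INR r + 1) * wk n r a k ^ 2) * (2 * INR r + 1)) with (2 * INR r + 1 - 4 * wk n r a k ^ 2) by (field; lra).
   lra. }
 unfold Rabs. destruct (Rcase_abs (lam n r a k)); lra. Qed.


Fixpoint tuples (L : list Z) (r : nat) : list (list Z) :=
  match r with O => nil :: nil | S r' => flat_map (fun x => map (cons x) (tuples L r')) L end.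

Lemma tuples_length L r : length (tuples L r) = (length L ^ r)%nat.
Proof. induction r; simpl; auto. rewrite <- IHr. clear IHr. generalize (tuples L r). intros T.
 induction L; simpl; auto. rewrite length_app, length_map, IHL. lia. Qed.

Lemma tuples_in L r l : length l = r -> (forall z, In z l -> In z L) -> In l (tuples L r).
Proof. revert l. induction r; intros l Hl Hin; destruct l; simpl in *; try lia; auto.
 apply in_flat_map. exists z. split. apply Hin; auto. apply in_map. apply IHr; auto. Qed.

Definition Lm (m : nat) : list Z := map (fun x => (Z.of_nat x - Z.of_nat (m+1))%Z) (seq 0 (2*m+2)).

Lemma Lm_in m z : (- Z.of_nat (m+1) <= z <= Z.of_nat m)%Z -> In z (Lm m).
Proof. intros H. unfold Lm. apply in_map_iff. exists (Z.to_nat (z + Z.of_nat (m+1))).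
 split. rewrite Z2Nat.id by lia. lia. apply in_seq. lia. Qed.

Lemma Lm_length m : length (Lm m) = (2*m+2)%nat.
Proof. unfold Lm. rewrite length_map, length_seq. auto. Qed.

Definition Y n a k j : Z := let u := U n a k j in
  if Nat.leb u (n - u) then Z.of_nat u else (Z.of_nat u - Z.of_nat n)%Z.

Lemma Y_abs n a k j : (0 < n)%nat -> Z.abs (Y n a k j) = Z.of_nat (dst n (U n a k j)).
Proof. intros Hn. unfold Y, dst. set (u := U n a k j).
 assert (u < n)%nat by (unfold u, U; apply Nat.mod_upper_bound; lia).
 destruct (Nat.leb_spec u (n - u)); lia. Qed.

Lemma Y_cong n a k j : (0 < n)%nat -> (Z.of_nat n | Y n a k j - Z.of_nat (k * a j))%Z.
Proof. intros Hn. unfold Y, U.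
 pose proof (Nat.div_mod_eq (k * a j) n) as Hd.
 set (u := ((k * a j) mod n)%nat) in *. set (qq := ((k * a j) / n)%nat) in *.
 destruct (Nat.leb_spec u (n - u)).
 - exists (- Z.of_nat qq)%Z. lia.
 - exists (- Z.of_nat qq - 1)%Z. lia. Qed.

Lemma dist_le_abs n z v : (0 < n)%nat -> (Z.of_nat n | z - Z.of_nat v)%Z ->
  (Z.of_nat (dst n (v mod n)) <= Z.abs z)%Z.
Proof. intros Hn [c Hc]. unfold dst.
 pose proof (Nat.div_mod_eq v n) as Hd. pose proof (Nat.mod_upper_bound v n ltac:(lia)).
 set (u := (v mod n)%nat) in *. set (qq := (v / n)%nat) in *.
 assert (Hz : (z = Z.of_nat u + Z.of_nat n * (c + Z.of_nat qq))%Z) by lia.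
 destruct (Z_le_gt_dec 0 (c + Z.of_nat qq)).
 - assert (0 <= Z.of_nat n * (c + Z.of_nat qq))%Z by nia. lia.
 - assert (Z.of_nat n * (c + Z.of_nat qq) <= - Z.of_nat n)%Z by nia. lia. Qed.

Lemma map_seq_eq (f g : nat -> Z) r : map f (seq 0 r) = map g (seq 0 r) -> forall j, (j < r)%nat -> f j = g j.
Proof. induction r; intros H j Hj; [lia|]. rewrite seq_S, !map_app in H. simpl in H.
 apply app_inj_tail in H. destruct H. destruct (Nat.eq_dec j r). subst; auto. apply IHr; auto; lia. Qed.

Definition cellv n r a q k := map (fun j => (Y n a k j / Z.of_nat q)%Z) (seq 0 r).

Lemma div_close (y y' q : Z) : (0 < q)%Z -> (y / q = y' / q)%Z -> (Z.abs (y - y') < q)%Z.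
Proof. intros Hq H. pose proof (Z.div_mod y q ltac:(lia)). pose proof (Z.div_mod y' q ltac:(lia)).
 pose proof (Z.mod_pos_bound y q Hq). pose proof (Z.mod_pos_bound y' q Hq). rewrite H in H0. lia. Qed.

Lemma div_range (y q : Z) (m : nat) : (0 < q)%Z -> (Z.abs y < Z.of_nat (m+1) * q)%Z ->
  (- Z.of_nat (m+1) <= y / q <= Z.of_nat m)%Z.
Proof. intros Hq H. pose proof (Z.div_mod y q ltac:(lia)). pose proof (Z.mod_pos_bound y q Hq).
 set (d := (y / q)%Z) in *. set (rr := (y mod q)%Z) in *. split.
 - destruct (Z_le_gt_dec (- Z.of_nat (m+1)) d); auto.
   assert (q * d <= q * (- Z.of_nat (m+1) - 1))%Z by (apply Z.mul_le_mono_nonneg_l; lia). nia.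
 - destruct (Z_le_gt_dec d (Z.of_nat m)); auto.
   assert (q * (Z.of_nat m + 1) <= q * d)%Z by (apply Z.mul_le_mono_nonneg_l; lia). nia. Qed.

Lemma cell_inj n r a q k k' : (0 < n)%nat -> (0 < q)%nat ->
  (forall d, (1 <= d < n)%nat -> (q <= Nk n r a d)%nat) ->
  (k < n)%nat -> (k' < n)%nat -> (k' < k)%nat -> cellv n r a q k = cellv n r a q k' -> False.
Proof. intros Hn Hq Hmin Hk Hk' Hlt Hc.
 assert (Hd : (Nk n r a (k - k') < q)%nat).
 { unfold Nk. apply maxN_lt; auto. intros j Hj.
   pose proof (map_seq_eq _ _ r Hc j Hj) as Hj'. simpl in Hj'.
   apply div_close in Hj'; [|lia].
   assert (Hdv : (Z.of_nat n | (Y n a k j - Y n a k' j) - Z.of_nat ((k - k') * a j))%Z).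
   { destruct (Y_cong n a k j Hn) as [c1 H1]. destruct (Y_cong n a k' j Hn) as [c2 H2].
     exists (c1 - c2)%Z. rewrite Nat2Z.inj_mul, Nat2Z.inj_sub by lia.
     rewrite Nat2Z.inj_mul in H1, H2. lia. }
   pose proof (dist_le_abs n _ _ Hn Hdv). unfold U. lia. }
 specialize (Hmin (k - k')%nat ltac:(lia)). lia. Qed.

Lemma count_bound n r a q m : (0 < n)%nat -> (0 < q)%nat ->
  (forall d, (1 <= d < n)%nat -> (q <= Nk n r a d)%nat) ->
  (length (filter (fun k => Nat.ltb (Nk n r a k) ((m+1)*q)) (seq 0 n)) <= (2*m+2)^r)%nat.
Proof. intros Hn Hq Hmin.
 set (F := filter (fun k => Nat.ltb (Nk n r a k) ((m+1)*q)) (seq 0 n)).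
 rewrite <- (length_map (cellv n r a q) F). rewrite <- Lm_length, <- tuples_length.
 apply NoDup_incl_length.
 - apply NoDup_map_NoDup_ForallPairs.
   + intros x y Hx Hy Hxy. unfold F in Hx, Hy. apply filter_In in Hx, Hy.
     destruct Hx as [Hx _], Hy as [Hy _]. apply in_seq in Hx, Hy.
     destruct (Nat.lt_total x y) as [H|[H|H]]; auto.
     exfalso. apply (cell_inj n r a q y x); auto; lia.
     exfalso. apply (cell_inj n r a q x y); auto; lia.
   + unfold F. apply NoDup_filter, seq_NoDup.
 - intros l Hl. apply in_map_iff in Hl. destruct Hl as [k [Hk HkF]]. subst l.
   unfold F in HkF. apply filter_In in HkF. destruct HkF as [_ Hlt]. apply Nat.ltb_lt in Hlt.
   apply tuples_in. unfold cellv. rewrite length_map, length_seq; auto.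
   intros z Hz. unfold cellv in Hz. apply in_map_iff in Hz. destruct Hz as [j [Hz Hj]]. subst z.
   apply in_seq in Hj. apply Lm_in. apply div_range. lia.
   rewrite Y_abs by auto.
   assert (dst n (U n a k j) <= Nk n r a k)%nat by (apply (maxN_ge r (fun j => dst n (U n a k j))); lia).
   nia. Qed.


Lemma argmin (f : nat -> nat) N : (1 <= N)%nat -> exists k, (k < N)%nat /\ forall d, (d < N)%nat -> (f k <= f d)%nat.
Proof. induction N; intros H; [lia|]. destruct N.
 - exists 0%nat. split; auto. intros d Hd. replace d with 0%nat by lia. auto.
 - destruct IHN as [k [Hk Hm]]; [lia|]. destruct (Nat.le_ge_cases (f k) (f (S N))).
   + exists k. split; [lia|]. intros d Hd. destruct (Nat.eq_dec d (S N)). subst; auto. apply Hm; lia.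
   + exists (S N). split; [lia|]. intros d Hd. destruct (Nat.eq_dec d (S N)). subst; auto.
     specialize (Hm d ltac:(lia)). lia. Qed.

Lemma exp_nat x N : exp (INR N * x) = exp x ^ N.
Proof. induction N. simpl. replace (0 * x) with 0 by ring. apply exp_0.
 rewrite S_INR. replace ((INR N + 1) * x) with (INR N * x + x) by ring. rewrite exp_plus, IHN. simpl. ring. Qed.

Lemma exp_le_exp x y : x <= y -> exp x <= exp y.
Proof. intros [H|H]. left; apply exp_increasing; auto. subst; lra. Qed.

Lemma exp_m1 : exp (-1) <= 1/2.
Proof. assert (E1 : exp (-1) * exp 1 = 1) by (rewrite <- exp_plus; replace (-1+1) with 0 by ring; apply exp_0).
 pose proof (exp_ineq1_le 1). pose proof (exp_pos 1). pose proof (exp_pos (-1)). nra. Qed.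

Lemma nat_bound m r : ((2*m+4)^r <= 2^(2*r*(m+1)))%nat.
Proof. assert (H : (2*m+4 <= 2^(2*(m+1)))%nat).
 { induction m. simpl; lia. replace (2 * (S m + 1))%nat with (2 + 2*(m+1))%nat by lia.
   rewrite Nat.pow_add_r. simpl (2^2)%nat. lia. }
 replace (2*r*(m+1))%nat with (2*(m+1)*r)%nat by lia. rewrite Nat.pow_mul_r.
 apply Nat.pow_le_mono_l. auto. Qed.

Lemma num_bound m r : (1/2)^((2*r+3)*(m+1)) * INR ((2*(S m)+2)^r) <= (1/8)^(m+1).
Proof. replace (2 * S m + 2)%nat with (2*m+4)%nat by lia.
 assert (H := le_INR _ _ (nat_bound m r)). rewrite (pow_INR 2) in H. simpl (INR 2) in H.
 replace ((2*r+3)*(m+1))%nat with (3*(m+1) + 2*r*(m+1))%nat by lia.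
 rewrite pow_add. replace (1/8) with ((1/2)^3) by field. rewrite <- pow_mult.
 assert (0 < (1/2)^(3*(m+1))) by (apply pow_lt; lra).
 assert (E1 : (1/2)^(2*r*(m+1)) * (1+1)^(2*r*(m+1)) = 1).
 { rewrite <- Rpow_mult_distr. replace (1/2*(1+1)) with 1 by field. apply pow1. }
 assert (0 < (1/2)^(2*r*(m+1))) by (apply pow_lt; lra).
 set (A := (1/2)^(3*(m+1))) in *. set (B := (1/2)^(2*r*(m+1))) in *.
 set (X := INR ((2*m+4)^r)) in *. set (Z := (1+1)^(2*r*(m+1))) in *.
 assert (B * X <= B * Z) by (apply Rmult_le_compat_l; lra). nra. Qed.

Lemma per_k (r n : nat) (a : nat -> nat) (t q : nat) (Hr : (1 <= r)%nat) (Hn : (0 < n)%nat) (Hq : (0 < q)%nat)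
  (Hmin : forall d, (1 <= d < n)%nat -> (q <= Nk n r a d)%nat)
  (Ht : INR t * (INR q / INR n)^2 > INR (2*r+3) / (4 / INR (2*r+1))) k : (1 <= k < n)%nat ->
  Rabs (lam n r a k) ^ t <= sumR n (fun m => (if Nat.ltb (Nk n r a k) ((S m + 1) * q) then 1 else 0) * (1/2)^((2*r+3)*(m+1))).
Proof. intros Hk. pose proof (INRp n Hn) as HnR.
 set (G := 4 / INR (2*r+1)) in *. set (K := INR (2*r+3) / G) in *.
 assert (HG0 : 0 < G) by (unfold G; apply Rdiv_lt_0_compat; [lra|apply lt_0_INR; lia]).
 pose proof HG0 as HG.
 pose proof (Hmin k Hk) as Hqk.
 set (m0 := (Nk n r a k / q - 1)%nat).
 pose proof (Nat.div_mod_eq (Nk n r a k) q). pose proof (Nat.mod_upper_bound (Nk n r a k) q ltac:(lia)).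
 assert (H1 : (1 <= Nk n r a k / q)%nat). { destruct (Nk n r a k / q)%nat eqn:E; [|lia]. nia. }
 assert (Hlo : ((m0+1) * q <= Nk n r a k)%nat) by (unfold m0; nia).
 assert (Hhi : (Nk n r a k < (S m0 + 1) * q)%nat) by (unfold m0; nia).
 assert (HNk : (2 * Nk n r a k <= n)%nat).
 { unfold Nk. destruct r as [|rr]. lia. destruct (maxN_att (S rr) (fun j => dst n (U n a k j))) as [j [_ ->]]; [lia|]. apply dist_half. }
 assert (Hm0 : (m0 < n)%nat). { assert (Nk n r a k / q <= Nk n r a k)%nat by (apply Nat.div_le_upper_bound; nia). unfold m0. lia. }
 eapply Rle_trans; [|apply (sumR_single_le n _ m0)]; auto.
 2:{ intros i _. apply Rmult_le_pos. destruct (Nat.ltb _ _); lra. apply pow_le; lra. }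
 assert (Hb : (Nk n r a k <? (S m0 + 1) * q)%nat = true) by (apply Nat.ltb_lt; auto).
 cbv beta. rewrite Hb, Rmult_1_l.
 set (N := ((2*r+3)*(m0+1))%nat).
 set (w := wk n r a k).
 pose proof (lam_abs_bound n r a k Hn Hr) as Hl. fold w in Hl. fold G in Hl.
 pose proof (wk_bounds n r a k Hn) as Hw. fold w in Hw.
 assert (Hwq : INR (m0+1) * (INR q / INR n) <= w).
 { unfold w, wk. apply le_INR in Hlo. rewrite mult_INR in Hlo. unfold Rdiv.
   rewrite <- Rmult_assoc. apply Rmult_le_compat_r. left; apply Rinv_0_lt_compat; lra. lra. }
 assert (Hexp : G * w^2 * INR t >= INR N).
 { unfold N. rewrite mult_INR.
   assert (HGK : G * K = INR (2*r+3)) by (unfold K; field; lra).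
   assert (0 <= INR q / INR n) by (unfold Rdiv; apply Rmult_le_pos; [apply pos_INR|left; apply Rinv_0_lt_compat; lra]).
   assert (1 <= INR (m0+1)) by (apply (le_INR 1); lia).
   assert (w^2 >= INR (m0+1)^2 * (INR q / INR n)^2).
   { rewrite <- Rpow_mult_distr. apply Rle_ge. apply pow_incr. split; [|auto]. apply Rmult_le_pos; lra. }
   assert (0 <= INR t) by apply pos_INR.
   assert (INR (2*r+3) > 0) by (apply lt_0_INR; lia).
   assert (G * (INR t * (INR q / INR n)^2) >= G * K) by (apply Rle_ge, Rmult_le_compat_l; lra).
   set (Q := INR t * (INR q / INR n)^2) in *.
   assert (G * w^2 * INR t >= INR (m0+1)^2 * (G * Q)).
   { unfold Q. assert (0 <= G * INR t) by nra. nra. }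
   set (x := INR (m0+1)) in *. rewrite HGK in H7.
   assert (x^2 * (G * Q) >= x^2 * INR (2*r+3)) by (apply Rle_ge, Rmult_le_compat_l; [nra|lra]).
   assert (0 <= (x^2 - x) * INR (2*r+3)) by (apply Rmult_le_pos; [simpl; nra|lra]).
   assert (x^2 * INR (2*r+3) >= INR (2*r+3) * x) by lra. lra. }
 eapply Rle_trans. apply pow_incr. split. apply Rabs_pos. apply Hl.
 pose proof (Rabs_pos (lam n r a k)).
 replace (1 - G*w^2) with (1 + - (G*w^2)) by ring.
 eapply Rle_trans. apply pow_incr. split. lra. apply (exp_ineq1_le (- (G * w^2))) .
 rewrite <- exp_nat.
 eapply Rle_trans. apply (exp_le_exp _ (INR N * (-1))). lra.
 rewrite exp_nat.
 apply pow_incr. split. left; apply exp_pos. apply exp_m1. Qed.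

Lemma dA_small (r n : nat) (a : nat -> nat) (t q : nat) (Hr : (1 <= r)%nat) (Hn : (0 < n)%nat) (Hq : (0 < q)%nat)
  (Hmin : forall d, (1 <= d < n)%nat -> (q <= Nk n r a d)%nat)
  (Ht : INR t * (INR q / INR n)^2 > INR (2*r+3) / (4 / INR (2*r+1))) : dA n r a t < 1/2.
Proof. pose proof (INRp n Hn) as HnR.
 set (c := fun m => (1/2)^((2*r+3)*(m+1))).
 set (H := fun k => sumR n (fun m => (if Nat.ltb (Nk n r a k) ((S m + 1) * q) then 1 else 0) * c m)).
 assert (Hpos : forall k, 0 <= H k).
 { intros k. apply sumR_nonneg. intros i _. apply Rmult_le_pos. destruct (Nat.ltb _ _); lra. unfold c; apply pow_le; lra. }
 eapply Rle_lt_trans. apply dA_bound; auto.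
 eapply Rle_lt_trans. apply (sumR_le _ _ (fun k => H (S k))). intros k Hk. apply (per_k r n a t q); auto; lia.
 assert (Hs : sumR (n-1) (fun k => H (S k)) <= sumR n H).
 { destruct n as [|nn]; [lia|]. replace (S nn - 1)%nat with nn by lia. rewrite sumR_first. pose proof (Hpos 0%nat). lra. }
 eapply Rle_lt_trans. apply Hs. unfold H. rewrite sumR_swap.
 rewrite (sumR_ext n _ (fun m => c m * sumR n (fun k => if Nat.ltb (Nk n r a k) ((S m + 1) * q) then 1 else 0))).
 2:{ intros m _. rewrite <- sumR_scal. apply sumR_ext. intros; ring. }
 eapply Rle_lt_trans. apply (sumR_le _ _ (fun m => (1/8)^(S m))).
 - intros m _. rewrite sumR_count. eapply Rle_trans. 2:{ replace (S m) with (m+1)%nat by lia. apply (num_bound m r). }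
   apply Rmult_le_compat_l. unfold c; apply pow_le; lra. apply le_INR. apply count_bound; auto.
 - rewrite geom_sum. assert (0 < (1/8)^n) by (apply pow_lt; lra). lra. Qed.



Theorem mainTheorem5 :
  forall r : nat, (1 <= r)%nat ->
  exists C : R,
    forall (n : nat) (a : nat -> nat),
      PI ^ r <= INR n ->
      irreducible n r a ->
      forall (t : nat) (M : R),
        is_tA n r a (1 / 2) t ->
        is_lam_m n r a M ->
        (1 - M) * INR t <= C.
Proof.
 intros r Hr.
 set (G := 4 / INR (2*r+1)). set (K := INR (2*r+3) / G).
 exists (2 * PI^2 * K).
 intros n a Hpi _ t M [HtA _] [_ HM].
 assert (HP3 : 3 < PI) by (pose proof PI2_3_2; lra).
 assert (Hn4 : (4 <= n)%nat).
 { assert (PI <= PI ^ r). { replace PI with (PI^1) at 1 by ring. apply Rle_pow; [lra|lia]. }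
   destruct (le_lt_dec 4 n); auto. assert (INR n <= 3) by (replace 3 with (INR 3) by (simpl; ring); apply le_INR; lia). lra. }
 assert (Hn : (0 < n)%nat) by lia. pose proof (INRp n Hn) as HnR.
 destruct (argmin (fun d => Nk n r a (S d)) (n-1) ltac:(lia)) as [k0' [Hk0 Hmin']].
 set (k0 := S k0'). set (q := Nk n r a k0).
 assert (Hmin : forall d, (1 <= d < n)%nat -> (q <= Nk n r a d)%nat).
 { intros d Hd. specialize (Hmin' (d-1)%nat ltac:(lia)). replace (S (d-1)) with d in Hmin' by lia. auto. }
 assert (HM0 : Rabs (lam n r a k0) <= M).
 { apply HM. exists (vk n k0). split; [|split].
   - exists 0%nat. split; auto. unfold vk. rewrite Nat.mul_0_r, E0. lra.
   - unfold vk. rewrite (sumR_ext n _ (fun i => E n (i * k0))) by (intros; rewrite Nat.mul_comm; auto).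
     apply cos_sum_zero; unfold k0; lia.
   - intros i _. apply eigen; auto. }
 assert (Hgap : 1 - M <= 2 * PI^2 * (INR q / INR n)^2).
 { pose proof (lam_upper_gap n r a k0 Hn). unfold wk in H. fold q in H.
   pose proof (Rle_abs (lam n r a k0)). lra. }
 pose proof (pos_INR t) as Ht0.
 assert (HG : 0 < G) by (unfold G; apply Rdiv_lt_0_compat; [lra|apply lt_0_INR; lia]).
 assert (HK : 0 < K) by (unfold K; apply Rdiv_lt_0_compat; [apply lt_0_INR; lia|lra]).
 destruct (Rle_lt_dec (INR t * (INR q / INR n)^2) K) as [Hc|Hc].
 - eapply Rle_trans. apply Rmult_le_compat_r. apply Ht0. apply Hgap.
   assert (0 < 2 * PI^2) by nra. nra.
 - exfalso. assert (Hq : (0 < q)%nat).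
   { destruct q; [|lia]. simpl in Hc. unfold Rdiv in Hc. rewrite Rmult_0_l in Hc. nra. }
   pose proof (dA_small r n a t q Hr Hn Hq Hmin Hc). lra.
Qed.
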